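(* Let $\alpha>0$ and $v>-\frac{7}{8}$, and let $$w_{\alpha,v}(z)=z+\sum_{n=1}^{\infty}a_n z^{n+1},\qquad a_n=\frac{(-1)^n(2n+\alpha)}{\alpha\, 4^n\, n!\,(v+1)_n},$$ for $z\in\mathcal{U}=\{z\in\mathbb{C}:|z|<1\}$, and for a nonnegative integer $m$ let $(w_{\alpha,v})_m(z)=z+\sum_{n=1}^{m}a_n z^{n+1}$ be its $m$-th partial sum. If $$8(\alpha-4)v+5\alpha-32\ge 0,$$ then for all $z\in\mathcal{U}$, $$\operatorname{Re}\left\{\frac{w_{\alpha,v}(z)}{(w_{\alpha,v})_m(z)}\right\}\ge \frac{8(\alpha-4)v+5\alpha-32}{(8v+7)\alpha}$$ and $$\operatorname{Re}\left\{\frac{(w_{\alpha,v})_m(z)}{w_{\alpha,v}(z)}\right\}\ge \frac{(8v+7)\alpha}{(8v+7)\alpha+32v+2\alpha+32}.$$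
   Context: $(\mu)_n=\mu(\mu+1)\cdots(\mu+n-1)$ is the Pochhammer symbol. The function $w_{\alpha,v}$ is the normalized Dini function $\frac{2^v}{\alpha}\Gamma(v+1)z^{1-v/2}\big((\alpha-v)J_v(\sqrt z)+\sqrt z J_v'(\sqrt z)\big)$, with $J_v$ the Bessel function of the first kind. The quotients are understood as analytic functions on $\mathcal{U}$ (taking the value $1$ at $z=0$). *)

(* Defs.v *)
From Stdlib Require Import Reals Arith.
From Coquelicot Require Import Coquelicot.
Open Scope R_scope.

Fixpoint poch (mu : R) (n : nat) : R :=
  match n with
  | O => 1
  | S k => poch mu k * (mu + INR k)
  end.

Definition dini_coef (alpha v : R) (n : nat) : R :=
  (-1) ^ n * (2 * INR n + alpha) /
  (alpha * 4 ^ n * INR (Factorial.fact n) * poch (v + 1) n).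

Definition CSeries (f : nat -> C) : C :=
  (Series (fun k => Re (f k)), Series (fun k => Im (f k))).

(* w_{alpha,v}(z) = z + sum_{n>=1} a_n z^{n+1}  (term k <-> n = k+1) *)
Definition w_dini (alpha v : R) (z : C) : C :=
  Cplus z (CSeries (fun k => Cmult (RtoC (dini_coef alpha v (S k)))
                                   (pow_n (K:=C_Ring) z (S (S k))))).

Definition w_dini_m (alpha v : R) (m : nat) (z : C) : C :=
  Cplus z (sum_n_m (G:=C_AbelianMonoid)
             (fun n => Cmult (RtoC (dini_coef alpha v n)) (pow_n (K:=C_Ring) z (S n)))
             1 m).

(* the quotients, understood as analytic functions with value 1 at z = 0 *)
Definition quot_w_wm (alpha v : R) (m : nat) (z : C) : C :=
  if Req_EM_T (Re z) 0 then if Req_EM_T (Im z) 0 then RtoC 1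
    else Cdiv (w_dini alpha v z) (w_dini_m alpha v m z)
  else Cdiv (w_dini alpha v z) (w_dini_m alpha v m z).

Definition quot_wm_w (alpha v : R) (m : nat) (z : C) : C :=
  if Req_EM_T (Re z) 0 then if Req_EM_T (Im z) 0 then RtoC 1
    else Cdiv (w_dini_m alpha v m z) (w_dini alpha v z)
  else Cdiv (w_dini_m alpha v m z) (w_dini alpha v z).

(* Main.v *)
Require Import Defs.
From Stdlib Require Import Reals Lra Lia Psatz.
From Coquelicot Require Import Coquelicot.
Open Scope R_scope.

Lemma pow2_fact (n : nat) : (2 ^ n <= 2 * Factorial.fact n)%nat.
Proof.
  induction n as [|n IH]; simpl; [lia|].
  destruct n as [|n]; simpl in *; [lia|].
  rewrite Nat.add_0_r. nia.
Qed.

Lemma npow2_fact (n : nat) : (1 <= n)%nat -> (n * 2 ^ n <= 4 * Factorial.fact n)%nat.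
Proof.
  intros Hn. destruct n as [|k]; [lia|].
  pose proof (pow2_fact k). simpl. nia.
Qed.

Lemma poch_ge (p : R) (n : nat) : 0 < p -> p ^ n <= poch p n.
Proof.
  intros Hp. induction n as [|n IH]; simpl; [lra|].
  pose proof (pos_INR n). rewrite Rmult_comm.
  apply Rmult_le_compat; try lra. apply pow_le; lra.
Qed.

Lemma poch_pos (p : R) (n : nat) : 0 < p -> 0 < poch p n.
Proof.
  intros Hp. induction n as [|n IH]; simpl; [lra|].
  pose proof (pos_INR n). apply Rmult_lt_0_compat; lra.
Qed.

Lemma coef_bound (alpha v : R) (n : nat) :
  0 < alpha -> 1/8 < v + 1 -> (1 <= n)%nat ->
  Rabs (dini_coef alpha v n) <= (8 + 2*alpha)/alpha * (/(8*(v+1))) ^ n.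
Proof.
  intros Ha Hp Hn. unfold dini_coef.
  set (p := v+1) in *.
  pose proof (poch_ge p n ltac:(lra)) as Hpo.
  pose proof (poch_pos p n ltac:(lra)) as Hpp.
  pose proof (pow2_fact n) as H1. pose proof (npow2_fact n Hn) as H2.
  apply le_INR in H1; apply le_INR in H2.
  rewrite !mult_INR, !pow_INR in H1, H2.
  replace (INR 2) with 2 in H1, H2 by (simpl; ring). replace (INR 4) with 4 in H2 by (simpl; ring).
  pose proof (pos_INR n) as Hn0.
  assert (Hf : 0 < INR (Factorial.fact n)) by (apply lt_0_INR; apply Factorial.lt_O_fact).
  assert (H4 : 0 < 4 ^ n) by (apply pow_lt; lra).
  assert (H2n : 0 < 2 ^ n) by (apply pow_lt; lra).
  assert (Hpn : 0 < p ^ n) by (apply pow_lt; lra).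
  assert (Hx : (/(8*p))^n = / (4^n * 2^n * p^n)).
  { rewrite pow_inv. f_equal. rewrite <- !Rpow_mult_distr. f_equal. ring. }
  rewrite Hx.
  rewrite Rabs_div.
  2:{ apply Rgt_not_eq. repeat apply Rmult_lt_0_compat; lra. }
  rewrite Rabs_mult, pow_1_abs, Rmult_1_l.

  rewrite (Rabs_right (2 * INR n + alpha)) by (apply Rle_ge; lra).
  rewrite (Rabs_right (_ * _)) by (apply Rle_ge; left; repeat apply Rmult_lt_0_compat; lra).
  pose proof (Rmult_le_compat_l alpha _ _ (Rlt_le _ _ Ha) H1) as H1a.
  rewrite mult_INR in H2. replace (INR 4) with 4 in H2 by (simpl; ring).
  assert (Hk : (2 * INR n + alpha) * 2^n <= (8 + 2*alpha) * INR (Factorial.fact n)) by lra.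
  apply Rle_trans with ((2 * INR n + alpha) / (alpha * 4 ^ n * INR (Factorial.fact n) * p^n)).
  - apply Rmult_le_compat_l; [lra|]. apply Rinv_le_contravar.
    + repeat apply Rmult_lt_0_compat; lra.
    + apply Rmult_le_compat_l; [|lra]. left; repeat apply Rmult_lt_0_compat; lra.
  - apply (Rmult_le_reg_r (alpha * 4 ^ n * INR (Factorial.fact n) * p^n * 2^n)).
    { repeat apply Rmult_lt_0_compat; lra. }
    replace ((2 * INR n + alpha) / (alpha * 4 ^ n * INR (Factorial.fact n) * p ^ n) *
      (alpha * 4 ^ n * INR (Factorial.fact n) * p ^ n * 2 ^ n)) with ((2 * INR n + alpha) * 2^n)
      by (field; repeat split; lra).
    replace ((8 + 2 * alpha) / alpha * / (4 ^ n * 2 ^ n * p ^ n) *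
      (alpha * 4 ^ n * INR (Factorial.fact n) * p ^ n * 2 ^ n))
      with ((8 + 2*alpha) * INR (Factorial.fact n)) by (field; repeat split; lra).
    exact Hk.
Qed.
Lemma geom_sum (x : R) (a N : nat) : (a <= S N)%nat ->
  (1 - x) * sum_n_m (fun k => x ^ k) a N = x ^ a - x ^ (S N).
Proof.
  revert a. induction N as [|N IH]; intros a Ha.
  - destruct a as [|[|a]]; [|  |lia].
    + rewrite sum_n_n. simpl. ring.
    + rewrite sum_n_m_zero by lia. simpl. change (zero : R_AbelianMonoid) with 0. ring.
  - destruct (Nat.eq_dec a (S (S N))) as [->|Hne].
    + rewrite sum_n_m_zero by lia. change (zero : R_AbelianMonoid) with 0. ring.
    + rewrite sum_n_Sm by lia. change (plus (G:=R_AbelianMonoid)) with Rplus.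
      rewrite Rmult_plus_distr_l, IH by lia. simpl. ring.
Qed.

Lemma Re_iter (l : list nat) (h : nat -> C) :
  Re (Iter.iter (plus (G:=C_AbelianMonoid)) (zero (G:=C_AbelianMonoid)) l h) =
  Iter.iter (plus (G:=R_AbelianMonoid)) (zero (G:=R_AbelianMonoid)) l (fun k => Re (h k)).
Proof.
  induction l as [|a l IH]; simpl; [reflexivity|].
  exact (f_equal (Rplus _) IH).
Qed.

Lemma Im_iter (l : list nat) (h : nat -> C) :
  Im (Iter.iter (plus (G:=C_AbelianMonoid)) (zero (G:=C_AbelianMonoid)) l h) =
  Iter.iter (plus (G:=R_AbelianMonoid)) (zero (G:=R_AbelianMonoid)) l (fun k => Im (h k)).
Proof.
  induction l as [|a l IH]; simpl; [reflexivity|].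
  exact (f_equal (Rplus _) IH).
Qed.

Lemma Re_sum (h : nat -> C) a b :
  Re (sum_n_m (G:=C_AbelianMonoid) h a b) = sum_n_m (fun k => Re (h k)) a b.
Proof. unfold sum_n_m, Iter.iter_nat. apply Re_iter. Qed.

Lemma Im_sum (h : nat -> C) a b :
  Im (sum_n_m (G:=C_AbelianMonoid) h a b) = sum_n_m (fun k => Im (h k)) a b.
Proof. unfold sum_n_m, Iter.iter_nat. apply Im_iter. Qed.

Lemma Cmod_pow_n (z : C) (k : nat) : Cmod (pow_n (K:=C_Ring) z k) = Cmod z ^ k.
Proof.
  induction k as [|k IH]; simpl.
  - apply Cmod_1.
  - change (mult (K:=C_Ring) z (pow_n z k)) with (Cmult z (pow_n (K:=C_Ring) z k)).
    rewrite Cmod_mult, IH. reflexivity.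
Qed.

Lemma Cmod_sum (h : nat -> C) a b :
  Cmod (sum_n_m (G:=C_AbelianMonoid) h a b) <= sum_n_m (fun k => Cmod (h k)) a b.
Proof.
  rewrite Cmod_norm.
  eapply Rle_trans. apply (norm_sum_n_m (K:=R_AbsRing) (V:=C_R_NormedModule)).
  apply sum_n_m_le. intros k. rewrite Cmod_norm. apply Rle_refl.
Qed.
Lemma Re_Cdiv (a b : C) : Re (Cdiv a b) = (Re a * Re b + Im a * Im b) / (Re b ^ 2 + Im b ^ 2).
Proof. destruct a as [a1 a2], b as [b1 b2]. unfold Cdiv, Cinv. simpl. unfold Rdiv. ring. Qed.

Lemma final_ineq (W Wm : C) (c : R) : 1 <= c ->
  c * Cmod (Cminus W Wm) < Cmod Wm ->
  Re (Cdiv W Wm) >= 1 - 1/c /\ Re (Cdiv Wm W) >= c / (1 + c).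
Proof.
  destruct W as [w1 w2], Wm as [a1 a2]. intros Hc H.
  rewrite !Re_Cdiv. simpl Re; simpl Im.
  unfold Cminus, Cplus, Copp in H. unfold Cmod in H. simpl fst in H; simpl snd in H.
  set (b1 := w1 + - a1) in H. set (b2 := w2 + - a2) in H.
  replace w1 with (a1 + b1) by (unfold b1; ring).
  replace w2 with (a2 + b2) by (unfold b2; ring).
  clearbody b1 b2.
  assert (HD0 : 0 <= b1^2 + b2^2) by nra.
  assert (HA0 : 0 <= a1^2 + a2^2) by nra.
  assert (H2 : c^2 * (b1^2 + b2^2) < a1^2 + a2^2).
  { assert (0 <= c * sqrt (b1^2+b2^2)) by (apply Rmult_le_pos; [lra|apply sqrt_pos]).
    pose proof (Rmult_le_0_lt_compat _ _ _ _ H0 H0 H H) as Hs.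
    rewrite <- (sqrt_sqrt (a1^2+a2^2)) by lra.
    replace (c^2 * (b1^2+b2^2)) with (c * sqrt (b1 ^ 2 + b2 ^ 2) * (c * sqrt (b1 ^ 2 + b2 ^ 2))).
    exact Hs. replace (c ^ 2 * (b1 ^ 2 + b2 ^ 2)) with (c*c * (sqrt (b1 ^ 2 + b2 ^ 2) * sqrt (b1 ^ 2 + b2 ^ 2))).
    ring. rewrite sqrt_sqrt by lra. ring. }
  set (D := a1^2 + a2^2) in *. set (B := b1^2+b2^2) in *.
  assert (HD : 0 < D) by nra.
  set (ab := a1*b1 + a2*b2).
  assert (Hsq1 : 0 <= (a1 + c*b1)^2 + (a2 + c*b2)^2) by (apply Rplus_le_le_0_compat; apply pow2_ge_0).
  assert (Hsq2 : 0 <= (a1 - c*b1)^2 + (a2 - c*b2)^2) by (apply Rplus_le_le_0_compat; apply pow2_ge_0).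
  assert (E1 : (a1 + c*b1)^2 + (a2 + c*b2)^2 = D + 2*c*ab + c^2*B) by (unfold D, B, ab; ring).
  assert (E2 : (a1 - c*b1)^2 + (a2 - c*b2)^2 = D - 2*c*ab + c^2*B) by (unfold D, B, ab; ring).
  assert (HE : (a1+b1)^2 + (a2+b2)^2 = D + 2*ab + B) by (unfold D, B, ab; ring).
  assert (Hc2 : 1 <= c^2) by nra.
  assert (HBD : B < D) by nra.
  split.
  - replace ((a1 + b1) * a1 + (a2 + b2) * a2) with (D + ab) by (unfold D, ab; ring).
    apply Rle_ge. apply (Rmult_le_reg_r (c * D)). nra.
    replace ((D + ab) / D * (c * D)) with (c*D + c*ab) by (field; lra).
    replace ((1 - 1/c) * (c * D)) with (c*D - D) by (field; lra).
    nra.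
  - replace (a1 * (a1 + b1) + a2 * (a2 + b2)) with (D + ab) by (unfold D, ab; ring).
    rewrite HE.
    assert (HEp : 0 < D + 2*ab + B).
    { destruct (Rle_or_lt (D + 2*ab + B) 0) as [Hle|]; [|assumption].
      exfalso. rewrite <- HE in Hle.
      assert (Z1 : (a1+b1)^2 = 0) by (pose proof (pow2_ge_0 (a1+b1)); pose proof (pow2_ge_0 (a2+b2)); lra).
      assert (Z2 : (a2+b2)^2 = 0) by (pose proof (pow2_ge_0 (a1+b1)); pose proof (pow2_ge_0 (a2+b2)); lra).
      assert (Y1 : a1 + b1 = 0) by (destruct (Req_dec (a1+b1) 0) as [|Hn]; [assumption|exfalso; exact (pow_nonzero _ 2 Hn Z1)]).
      assert (Y2 : a2 + b2 = 0) by (destruct (Req_dec (a2+b2) 0) as [|Hn]; [assumption|exfalso; exact (pow_nonzero _ 2 Hn Z2)]).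
      assert (D = B) by (unfold D, B; replace a1 with (-b1) by lra; replace a2 with (-b2) by lra; ring).
      lra. }
    apply Rle_ge. apply (Rmult_le_reg_r ((1+c)*(D + 2*ab + B))). nra.
    replace (c / (1 + c) * ((1 + c) * (D + 2 * ab + B))) with (c * (D + 2*ab+B)) by (field; lra).
    replace ((D + ab) / (D + 2 * ab + B) * ((1 + c) * (D + 2 * ab + B))) with ((1+c)*(D+ab)) by (field; lra).
    assert (Hk : 2*(c-1)*ab*c <= (c-1)*(D + c^2*B)) by nra.
    nra.
Qed.
Lemma series_lim (a : nat -> R) : ex_series a -> is_lim_seq (sum_n a) (Series a).
Proof. intros H. apply Series_correct in H. exact H. Qed.

Lemma tail_lim (f : nat -> C) (m : nat) (Bt : R) :
  ex_series (fun k => Re (f (S k))) -> ex_series (fun k => Im (f (S k))) ->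
  (forall N, (m <= N)%nat -> Cmod (sum_n_m (G:=C_AbelianMonoid) f (S m) N) <= Bt) ->
  Cmod (Cminus (CSeries (fun k => f (S k))) (sum_n_m (G:=C_AbelianMonoid) f 1 m)) <= Bt.
Proof.
  intros Hr Hi HB.
  assert (HB0 : 0 <= Bt) by (eapply Rle_trans; [apply Cmod_ge_0|apply (HB m); lia]).
  set (qr := fun N => Re (sum_n_m (G:=C_AbelianMonoid) f 1 N)).
  set (qi := fun N => Im (sum_n_m (G:=C_AbelianMonoid) f 1 N)).
  assert (Er : forall N, sum_n (fun k => Re (f (S k))) N = qr (S N)).
  { intros N. unfold sum_n, qr. rewrite Re_sum. apply (sum_n_m_S (fun k => Re (f k))). }
  assert (Ei : forall N, sum_n (fun k => Im (f (S k))) N = qi (S N)).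
  { intros N. unfold sum_n, qi. rewrite Im_sum. apply (sum_n_m_S (fun k => Im (f k))). }
  pose proof (series_lim _ Hr) as Lr. pose proof (series_lim _ Hi) as Li.
  set (X := Series (fun k => Re (f (S k)))) in *.
  set (Y := Series (fun k => Im (f (S k)))) in *.
  assert (Lr' : is_lim_seq (fun N => qr (S (N + m))) X).
  { apply (is_lim_seq_ext (fun N => sum_n (fun k => Re (f (S k))) (N + m))).
    intros; apply Er. apply -> is_lim_seq_incr_n. exact Lr. }
  assert (Li' : is_lim_seq (fun N => qi (S (N + m))) Y).
  { apply (is_lim_seq_ext (fun N => sum_n (fun k => Im (f (S k))) (N + m))).
    intros; apply Ei. apply -> is_lim_seq_incr_n. exact Li. }
  set (s := fun N => (qr (S (N + m)) - qr m) * (qr (S (N + m)) - qr m)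
                   + (qi (S (N + m)) - qi m) * (qi (S (N + m)) - qi m)).
  assert (Ls : is_lim_seq s ((X - qr m) * (X - qr m) + (Y - qi m) * (Y - qi m))).
  { unfold s. apply is_lim_seq_plus'; apply is_lim_seq_mult'; apply is_lim_seq_minus';
      try assumption; apply is_lim_seq_const. }
  assert (Hs : forall N, s N <= Bt * Bt).
  { intros N. unfold s, qr, qi.
    rewrite (sum_n_m_Chasles f 1 m (S (N + m))) by lia.
    set (t := sum_n_m f (S m) (S (N + m))).
    pose proof (HB (S (N + m)) ltac:(lia)) as H. fold t in H.
    change (plus (G:=C_AbelianMonoid) (sum_n_m f 1 m) t) with (Cplus (sum_n_m f 1 m) t).
    destruct (sum_n_m (G:=C_AbelianMonoid) f 1 m) as [u1 u2]. destruct t as [t1 t2].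
    simpl. unfold Cmod in H. simpl in H.
    replace (u1 + t1 - u1) with t1 by ring. replace (u2 + t2 - u2) with t2 by ring.
    assert (0 <= sqrt (t1 * (t1 * 1) + t2 * (t2 * 1))) by apply sqrt_pos.
    rewrite <- (sqrt_sqrt (t1 * t1 + t2 * t2)) by nra.
    replace (t1 * t1 + t2 * t2) with (t1 * (t1 * 1) + t2 * (t2 * 1)) by ring.
    apply Rmult_le_compat; assumption. }
  pose proof (is_lim_seq_le s (fun _ => Bt * Bt) _ _ Hs Ls (is_lim_seq_const _)) as Hl.
  simpl in Hl.
  unfold Cminus, CSeries, Cmod. fold X Y. simpl.
  change (fst (sum_n_m f 1 m)) with (qr m). change (snd (sum_n_m f 1 m)) with (qi m).
  rewrite <- (sqrt_Rsqr Bt) by lra. apply sqrt_le_1_alt. unfold Rsqr.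
  replace ((X + - qr m) * ((X + - qr m) * 1) + (Y + - qi m) * ((Y + - qi m) * 1))
    with ((X - qr m) * (X - qr m) + (Y - qi m) * (Y - qi m)) by ring.
  exact Hl.
Qed.
Lemma im_le_Cmod (c : C) : Rabs (Im c) <= Cmod c.
Proof.
  destruct c as [a b]. unfold Cmod. simpl.
  rewrite <- sqrt_Rsqr_abs. apply sqrt_le_1_alt. unfold Rsqr.
  pose proof (Rle_0_sqr a). unfold Rsqr in *. nra.
Qed.

Lemma sum_n_m_le_loc (u w : nat -> R) a N :
  (forall n, (a <= n)%nat -> u n <= w n) -> sum_n_m u a N <= sum_n_m w a N.
Proof.
  intros H.
  rewrite (sum_n_m_ext_loc u (fun n => if Compare_dec.le_dec a n then u n else w n)).
  2:{ intros k Hk. destruct (Compare_dec.le_dec a k); [reflexivity|lia]. }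
  apply sum_n_m_le. intros k. destruct (Compare_dec.le_dec a k); [apply H; assumption|apply Rle_refl].
Qed.

Lemma geom_c (C0 x : R) (a N : nat) : (a <= S N)%nat ->
  (1 - x) * sum_n_m (fun k => C0 * x ^ k) a N = C0 * (x ^ a - x ^ (S N)).
Proof.
  intros H. rewrite <- geom_sum by assumption.
  rewrite (sum_n_m_ext _ (fun k => mult C0 (x ^ k))) by reflexivity.
  rewrite sum_n_m_mult_l. change (mult C0 ?y) with (C0 * y).
  change (sum_n_m (pow x) a N) with (sum_n_m (fun k => x^k) a N). ring.
Qed.

Lemma pow_le1 (x : R) (n : nat) : 0 <= x < 1 -> x ^ n <= 1.
Proof.
  intros H. destruct n as [|n]; [simpl; lra|].
  left. apply (pow_lt_1_compat x (S n) H). lia.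
Qed.

Theorem theorem2p1 (alpha v : R) (m : nat) :
  0 < alpha -> -(7/8) < v ->
  0 <= 8 * (alpha - 4) * v + 5 * alpha - 32 ->
  forall z : C, Cmod z < 1 ->
    Re (quot_w_wm alpha v m z) >=
      (8 * (alpha - 4) * v + 5 * alpha - 32) / ((8 * v + 7) * alpha)
    /\
    Re (quot_wm_w alpha v m z) >=
      ((8 * v + 7) * alpha) / ((8 * v + 7) * alpha + 32 * v + 2 * alpha + 32).
Proof.
  intros Ha Hv Hh z Hz.
  assert (Hv5 : 0 < 8 * v + 5) by nra.
  set (c := ((8 * v + 7) * alpha) / (32 * v + 2 * alpha + 32)).
  assert (Hden : 0 < 32 * v + 2 * alpha + 32) by lra.
  assert (Hc : 1 <= c).
  { unfold c. apply (Rmult_le_reg_r (32 * v + 2 * alpha + 32)); [lra|].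
    unfold Rdiv. rewrite Rmult_assoc, Rinv_l by lra. nra. }
  assert (E1 : (8 * (alpha - 4) * v + 5 * alpha - 32) / ((8 * v + 7) * alpha) = 1 - 1/c).
  { unfold c. field. repeat split; nra. }
  assert (E2 : ((8 * v + 7) * alpha) / ((8 * v + 7) * alpha + 32 * v + 2 * alpha + 32) = c / (1 + c)).
  { unfold c. field. repeat split; nra. }
  rewrite E1, E2.
  assert (Hmain : Re (Cdiv (w_dini alpha v z) (w_dini_m alpha v m z)) >= 1 - 1 / c /\
                  Re (Cdiv (w_dini_m alpha v m z) (w_dini alpha v z)) >= c / (1 + c)
                  \/ z = RtoC 0).
  { destruct (Req_dec (Cmod z) 0) as [Hz0|Hz0].
    { right. apply Cmod_eq_0. exact Hz0. }
    left.
    set (r := Cmod z) in *.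
    assert (Hr : 0 < r) by (pose proof (Cmod_ge_0 z); fold r in H; lra).
    set (p := v + 1).
    assert (Hp : 3/8 < p) by (unfold p; lra).
    set (x := / (8 * p)).
    assert (Hx0 : 0 < x) by (unfold x; apply Rinv_0_lt_compat; lra).
    assert (Hx8 : x * (8 * p) = 1) by (unfold x; field; lra).
    assert (Hx1 : x < 1/3) by nra.
    set (K := (8 + 2 * alpha) / alpha).
    assert (HK : 0 < K) by (unfold K; apply Rdiv_lt_0_compat; lra).
    set (f := fun n => Cmult (RtoC (dini_coef alpha v n)) (pow_n (K:=C_Ring) z (S n))).
    assert (Hf : forall n, (1 <= n)%nat -> Cmod (f n) <= (r^2 * K) * x ^ n).
    { intros n Hn. unfold f. rewrite Cmod_mult, Cmod_R, Cmod_pow_n. fold r.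
      pose proof (coef_bound alpha v n Ha ltac:(lra) Hn) as Hb. fold p x K in Hb.
      destruct n as [|k]; [lia|].
      assert (Hrk : r ^ k <= 1) by (apply pow_le1; lra).
      assert (Hr2 : r ^ (S (S k)) <= r ^ 2).
      { simpl. assert (0 <= r * r) by nra. nra. }
      assert (0 <= r ^ (S (S k))) by (apply pow_le; lra).
      replace (r ^ 2 * K * x ^ S k) with (K * x ^ S k * r ^ 2) by ring.
      apply Rmult_le_compat; try assumption. apply Rabs_pos. }
    assert (Htail : forall N, (m <= N)%nat ->
      Cmod (sum_n_m (G:=C_AbelianMonoid) f (S m) N) <= (r^2 * K) * x ^ (S m) / (1 - x)).
    { intros N HN. eapply Rle_trans; [apply Cmod_sum|].
      eapply Rle_trans.
      { apply (sum_n_m_le_loc _ (fun k => (r^2 * K) * x ^ k)). intros; apply Hf; lia. }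
      apply (Rmult_le_reg_l (1 - x)); [lra|].
      rewrite geom_c by lia.
      replace ((1 - x) * (r ^ 2 * K * x ^ S m / (1 - x))) with (r ^ 2 * K * x ^ S m) by (field; lra).
      assert (0 <= x ^ S N) by (apply pow_le; lra).
      assert (0 < r ^ 2 * K) by (apply Rmult_lt_0_compat; [apply pow_lt|]; lra).
      nra. }
    assert (Hhead : Cmod (sum_n_m (G:=C_AbelianMonoid) f 1 m) <= (r^2 * K) * (x - x ^ (S m)) / (1 - x)).
    { eapply Rle_trans; [apply Cmod_sum|].
      eapply Rle_trans.
      { apply (sum_n_m_le_loc _ (fun k => (r^2 * K) * x ^ k)). intros; apply Hf; lia. }
      apply (Rmult_le_reg_l (1 - x)); [lra|].
      rewrite geom_c by lia.
      replace ((1 - x) * (r ^ 2 * K * (x - x ^ S m) / (1 - x))) with (r ^ 2 * K * (x - x ^ S m)) by (field; lra).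
      rewrite pow_1. lra. }
    assert (Hgeo : ex_series (fun k => (r^2 * K) * x ^ (S k))).
    { assert (Hg : ex_series (fun n => x ^ n)).
      { exists (/ (1 - x)). apply is_series_geom. rewrite Rabs_right; lra. }
      apply (ex_series_scal_l (r^2 * K * x)) in Hg.
      eapply ex_series_ext; [|exact Hg]. intros n. change (scal ?a ?b) with (a * b). simpl. ring. }
    assert (Hre : ex_series (fun k => Re (f (S k)))).
    { eapply (ex_series_le (K:=R_AbsRing) (V:=R_CompleteNormedModule)); [|exact Hgeo].
      intros k. change (norm ?y) with (Rabs y). eapply Rle_trans; [apply re_le_Cmod|]. apply Hf; lia. }
    assert (Him : ex_series (fun k => Im (f (S k)))).
    { eapply (ex_series_le (K:=R_AbsRing) (V:=R_CompleteNormedModule)); [|exact Hgeo].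
      intros k. change (norm ?y) with (Rabs y). eapply Rle_trans; [apply im_le_Cmod|]. apply Hf; lia. }
    pose proof (tail_lim f m _ Hre Him Htail) as TL.
    change (w_dini alpha v z) with (Cplus z (CSeries (fun k => f (S k)))).
    change (w_dini_m alpha v m z) with (Cplus z (sum_n_m (G:=C_AbelianMonoid) f 1 m)).
    assert (EQ : Cminus (Cplus z (CSeries (fun k => f (S k)))) (Cplus z (sum_n_m (G:=C_AbelianMonoid) f 1 m))
                 = Cminus (CSeries (fun k => f (S k))) (sum_n_m (G:=C_AbelianMonoid) f 1 m)).
    { destruct z as [z1 z2]. destruct (CSeries _) as [s1 s2].
      destruct (sum_n_m _ _ _) as [q1 q2]. unfold Cminus, Cplus, Copp. simpl. f_equal; ring. }
    assert (LB : r - Cmod (sum_n_m (G:=C_AbelianMonoid) f 1 m) <= Cmod (Cplus z (sum_n_m (G:=C_AbelianMonoid) f 1 m))).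
    { set (q := sum_n_m (G:=C_AbelianMonoid) f 1 m).
      assert (Ez : z = Cplus (Cplus z q) (Copp q)).
      { destruct z as [z1 z2]; destruct q as [q1 q2]. unfold Cplus, Copp. simpl. f_equal; ring. }
      unfold r. rewrite Ez at 1. pose proof (Cmod_triangle (Cplus z q) (Copp q)).
      rewrite Cmod_opp in H. lra. }
    apply final_ineq; [exact Hc|].
    rewrite EQ.
    set (y := x ^ S m) in *.
    assert (Hy0 : 0 <= y) by (apply pow_le; lra).
    assert (Hyx : y <= x).
    { unfold y. simpl. pose proof (pow_le1 x m ltac:(lra)). nra. }
    assert (Hsb : c * (K * x / (1 - x)) = (8 + 2 * alpha) / (32 * p + 2 * alpha)).
    { unfold c, K, x, p. field. repeat split; nra. }
    assert (Hsb1 : c * (K * x / (1 - x)) <= 1).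
    { rewrite Hsb. apply (Rmult_le_reg_r (32 * p + 2 * alpha)); [lra|].
      unfold Rdiv. rewrite Rmult_assoc, Rinv_l by lra. lra. }
    set (Hh1 := K * y / (1 - x)). set (G1 := K * (x - y) / (1 - x)).
    assert (HH0 : 0 <= Hh1) by (unfold Hh1; apply Rdiv_le_0_compat; nra).
    assert (HG0 : 0 <= G1) by (unfold G1; apply Rdiv_le_0_compat; nra).
    assert (HS : Hh1 + G1 = K * x / (1 - x)) by (unfold Hh1, G1; field; lra).
    assert (Ht2 : r ^ 2 * K * y / (1 - x) = r^2 * Hh1) by (unfold Hh1; field; lra).
    assert (Hh2 : r ^ 2 * K * (x - y) / (1 - x) = r^2 * G1) by (unfold G1; field; lra).
    rewrite Ht2 in TL. rewrite Hh2 in Hhead.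
    assert (Hcm : c * (Hh1 + G1) <= 1) by (rewrite HS; exact Hsb1).
    assert (Hr2 : r^2 < r) by (simpl; nra).
    assert (0 < r ^ 2) by (apply pow_lt; lra).
    assert (c * Hh1 + G1 <= 1) by nra.
    assert (r^2 * (c * Hh1 + G1) <= r^2) by nra.
    apply Rmult_le_compat_l with (r := c) in TL; [|lra].
    lra. }
  unfold quot_w_wm, quot_wm_w.
  destruct (Req_EM_T (Re z) 0) as [H1|H1]; [destruct (Req_EM_T (Im z) 0) as [H2|H2]|].
  - simpl. split; apply Rle_ge.
    + assert (0 < 1/c) by (apply Rdiv_lt_0_compat; lra). lra.
    + apply (Rmult_le_reg_r (1+c)); [lra|]. unfold Rdiv. rewrite Rmult_assoc, Rinv_l by lra. lra.
  - destruct Hmain as [Hm|Hm]; [exact Hm|]. subst z. simpl in H2. lra.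
  - destruct Hmain as [Hm|Hm]; [exact Hm|]. subst z. simpl in H1. lra.
Qed.
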